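(* Let $L$ be a multisorted algebra in the positive quantifier-free signature satisfying axioms (0), (1), (2). Let $k_1+\dots+k_m=n$, let $c_i\colon k_i\to n$ ($i=1,\dots,m$) be the partitioning cylindrifications, and for each $i$ let $F^i$ be a prime filter on sort $k_i$ of $L$. Then there is a prime filter $G$ on sort $n$ of $L$ such that for each $i=1,\dots,m$ and every $r$ of sort $k_i$, we have $c_i(r)\in G$ if and only if $r\in F^i$.
   Context: Signature. There is a sort $n$ for each natural number $n\ge 0$. For every function $\alpha\colon\{1,\dots,n\}\to\{1,\dots,k\}$ there is a unary function symbol (''substitution'') $\alpha\colon n\to k$ (argument of sort $n$, value of sort $k$). For each sort there are constants $0,1$ and binary operations $\vee,\wedge$ (the positive quantifier-free signature). Partitioning cylindrifications: given $k_1,\dots,k_m$ and $n=k_1+\dots+k_m$, the substitutions $c_i\colon k_i\to n$ given by the functions $c_i(l)=l+\sum_{j<i}k_j$. In an algebra, $x\le y$ (also $y\ge x$) means $x=x\wedge y$. Axioms: (0) For all partitioning cylindrifications $c_1,\dots,c_m$, $c_i\colon k_i\to k_1+\dots+k_m$, and all $r_i,s_i$ of sort $k_i$: if $\bigvee_{i=1}^m c_i(s_i)\ge\bigwedge_{i=1}^m c_i(r_i)$ then $s_i\ge r_i$ for some $i$ (including the case $m=0$, which says $0\ge1$ fails in sort $0$). (1) Each sort is a bounded distributive lattice under $0,1,\vee,\wedge$. (2) Every substitution preserves $0,1,\vee,\wedge$. A prime filter of a bounded distributive lattice is a proper, nonempty, upward-closed subset closed under $\wedge$ such that $x\vee y\in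 F$ implies $x\in F$ or $y\in F$. The Boolean prime ideal theorem is assumed. *)

(* Defs.v *)
From mathcomp Require Import all_boot.
Set Implicit Arguments. Unset Strict Implicit. Unset Printing Implicit Defensive.

(* A multisorted algebra in the positive quantifier-free signature:
   one sort [car n] for each natural number n; for every function
   alpha : {1..n} -> {1..k} (rendered 0-indexed as 'I_n -> 'I_k) a unary
   substitution symbol from sort n to sort k; constants 0,1 and binary
   operations join (\/), meet (/\) on every sort. *)
Record MAlg := {
  car : nat -> Type;
  zero : forall n, car n;
  one : forall n, car n;
  join : forall n, car n -> car n -> car n;
  meet : forall n, car n -> car n -> car n;
  subst : forall n k, ('I_n -> 'I_k) -> car n -> car k
}.

Section Defs.
Variable L : MAlg.

Definition le n (x y : car L n) : Prop := x = meet x y.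

Definition offset m (k : 'I_m -> nat) (i : 'I_m) : nat :=
  \sum_(j < m | (j < i)%N) k j.

Lemma cyl_proof m (k : 'I_m -> nat) (i : 'I_m) (l : 'I_(k i)) :
  (l + offset k i < \sum_(j < m) k j)%N.
Proof.
rewrite /offset [X in (_ < X)%N](bigID (fun j : 'I_m => (j < i)%N)) /= [X in (X < _)%N]addnC ltn_add2l.
rewrite (bigD1 i) ?ltnn //=.
by apply: (leq_trans (ltn_ord l)); apply: leq_addr.
Qed.

Definition cyl m (k : 'I_m -> nat) (i : 'I_m) : 'I_(k i) -> 'I_(\sum_(j < m) k j) :=
  fun l => Ordinal (cyl_proof l).

(* Axiom (1): every sort is a bounded distributive lattice. *)
Definition bdl_axioms : Prop :=
  forall n, 
  (forall x y z : car L n, join x (join y z) = join (join x y) z) /\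
  (forall x y z : car L n, meet x (meet y z) = meet (meet x y) z) /\
  (forall x y : car L n, join x y = join y x) /\
  (forall x y : car L n, meet x y = meet y x) /\
  (forall x y : car L n, join x (meet x y) = x) /\
  (forall x y : car L n, meet x (join x y) = x) /\
  (forall x y z : car L n, meet x (join y z) = join (meet x y) (meet x z)) /\
  (forall x : car L n, join x (zero L n) = x) /\
  (forall x : car L n, meet x (one L n) = x).

(* Axiom (2): every substitution preserves 0, 1, join, meet. *)
Definition subst_axioms : Prop :=
  forall n k (a : 'I_n -> 'I_k),
  [/\ subst a (zero L n) = zero L k,
      subst a (one L n) = one L k,
      forall x y : car L n, subst a (join x y) = join (subst a x) (subst a y)
    & forall x y : car L n, subst a (meet x y) = meet (subst a x) (subst a y)].

Definition axiom0 : Prop :=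
  forall m (k : 'I_m -> nat) (r s : forall i : 'I_m, car L (k i)),
    le (\big[@meet L _/one L _]_(i < m) @subst L _ _ (@cyl m k i) (r i))
       (\big[@join L _/zero L _]_(i < m) @subst L _ _ (@cyl m k i) (s i)) ->
    exists i : 'I_m, le (r i) (s i).

Definition axioms : Prop := [/\ axiom0, bdl_axioms & subst_axioms].

Definition prime_filter n (F : car L n -> Prop) : Prop :=
  [/\ exists x, ~ F x,
      exists x, F x,
      forall x y, F x -> le x y -> F y,
      forall x y, F x -> F y -> F (meet x y)
    & forall x y, F (join x y) -> F x \/ F y].

End Defs.

(* Main.v *)
Require Import Defs.
From mathcomp Require Import all_boot.
From mathcomp Require boolp classical_sets.
From Stdlib Require Import Classical.

Set Implicit Arguments. Unset Strict Implicit. Unset Printing Implicit Defensive.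

Ltac bdl hB n := let jA := fresh "jA" in let mA := fresh "mA" in
  let jC := fresh "jC" in let mC := fresh "mC" in let jK := fresh "jK" in
  let mK := fresh "mK" in let mD := fresh "mD" in let j0 := fresh "j0" in
  let m1 := fresh "m1" in
  have [jA [mA [jC [mC [jK [mK [mD [j0 m1]]]]]]]] := hB n.

Lemma meetxx (L : MAlg) (hB : bdl_axioms L) n (x : car L n) : meet x x = x.
Proof. bdl hB n. have e := mK x (meet x x). by rewrite jK in e. Qed.

Lemma le_refl' (L : MAlg) (hB : bdl_axioms L) n (x : car L n) : le x x.
Proof. by rewrite /le meetxx. Qed.

Lemma le_trans' (L : MAlg) (hB : bdl_axioms L) n (x y z : car L n) :
  le x y -> le y z -> le x z.
Proof. bdl hB n. rewrite /le => exy eyz. by rewrite {2}exy -mA -eyz -exy. Qed.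

Lemma le_meetl (L : MAlg) (hB : bdl_axioms L) n (x y : car L n) : le (meet x y) x.
Proof. bdl hB n. by rewrite /le (mC _ x) mA meetxx. Qed.

Lemma le_meetr (L : MAlg) (hB : bdl_axioms L) n (x y : car L n) : le (meet x y) y.
Proof. bdl hB n. by rewrite /le -mA meetxx. Qed.

Lemma le_glb (L : MAlg) (hB : bdl_axioms L) n (a b c : car L n) :
  le a b -> le a c -> le a (meet b c).
Proof. bdl hB n. rewrite /le => eb ec. by rewrite mA -eb. Qed.

Lemma le_one (L : MAlg) (hB : bdl_axioms L) n (x : car L n) : le x (Defs.one L n).
Proof. bdl hB n. by rewrite /le m1. Qed.

Lemma le_joinl (L : MAlg) (hB : bdl_axioms L) n (x y : car L n) : le x (join x y).
Proof. bdl hB n. by rewrite /le mK. Qed.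

Lemma le_joinr (L : MAlg) (hB : bdl_axioms L) n (x y : car L n) : le y (join x y).
Proof. bdl hB n. by rewrite /le jC mK. Qed.

Lemma le_zero (L : MAlg) (hB : bdl_axioms L) n (x : car L n) : le (Defs.zero L n) x.
Proof. bdl hB n. have e := mK (Defs.zero L n) x. by rewrite jC j0 in e. Qed.

Lemma le_lub (L : MAlg) (hB : bdl_axioms L) n (x y z : car L n) :
  le x z -> le y z -> le (join x y) z.
Proof.
bdl hB n. rewrite /le => ex ey. by rewrite mC mD (mC z x) (mC z y) -ex -ey.
Qed.

Lemma le_meet2 (L : MAlg) (hB : bdl_axioms L) n (x y x' y' : car L n) :
  le x y -> le x' y' -> le (meet x x') (meet y y').
Proof.
move=> h h'; apply: le_glb => //.
  exact: le_trans' (le_meetl hB _ _) h.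
exact: le_trans' (le_meetr hB _ _) h'.
Qed.

Lemma le_join2 (L : MAlg) (hB : bdl_axioms L) n (x y x' y' : car L n) :
  le x y -> le x' y' -> le (join x x') (join y y').
Proof.
move=> h h'; apply: le_lub => //.
  exact: le_trans' h (le_joinl hB _ _).
exact: le_trans' h' (le_joinr hB _ _).
Qed.

Lemma le_subst (L : MAlg) (HS : subst_axioms L) n k (a : 'I_n -> 'I_k) (x y : car L n) :
  le x y -> le (subst a x) (subst a y).
Proof. have [_ _ _ hm] := HS n k a. rewrite /le => e. by rewrite -hm -e. Qed.

Lemma bigmeet_mono (L : MAlg) (hB : bdl_axioms L) n m (f g : 'I_m -> car L n) :
  (forall i, le (f i) (g i)) ->
  le (\big[@meet L n/Defs.one L n]_(i < m) f i) (\big[@meet L n/Defs.one L n]_(i < m) g i).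
Proof.
elim: m f g => [|m IH] f g h; first by rewrite !big_ord0; apply: le_refl'.
rewrite !big_ord_recl; apply: le_meet2 => //; exact: IH.
Qed.

Lemma bigjoin_mono (L : MAlg) (hB : bdl_axioms L) n m (f g : 'I_m -> car L n) :
  (forall i, le (f i) (g i)) ->
  le (\big[@join L n/Defs.zero L n]_(i < m) f i) (\big[@join L n/Defs.zero L n]_(i < m) g i).
Proof.
elim: m f g => [|m IH] f g h; first by rewrite !big_ord0; apply: le_refl'.
rewrite !big_ord_recl; apply: le_join2 => //; exact: IH.
Qed.

Lemma bigmeet_lb (L : MAlg) (hB : bdl_axioms L) n m (f : 'I_m -> car L n) i :
  le (\big[@meet L n/Defs.one L n]_(j < m) f j) (f i).
Proof.
elim: m f i => [|m IH] f i; first by case: i.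
rewrite big_ord_recl; case: (unliftP ord0 i) => [j ->|->].
  exact: le_trans' (le_meetr hB _ _) (IH _ _).
exact: le_meetl.
Qed.

Lemma bigjoin_ub (L : MAlg) (hB : bdl_axioms L) n m (f : 'I_m -> car L n) i :
  le (f i) (\big[@join L n/Defs.zero L n]_(j < m) f j).
Proof.
elim: m f i => [|m IH] f i; first by case: i.
rewrite big_ord_recl; case: (unliftP ord0 i) => [j ->|->].
  exact: le_trans' (IH _ _) (le_joinr hB _ _).
exact: le_joinl.
Qed.


Lemma prime_ext (L : MAlg) (hB : bdl_axioms L) n (H I : car L n -> Prop) :
  H (Defs.one L n) -> (forall x y, H x -> le x y -> H y) ->
  (forall x y, H x -> H y -> H (meet x y)) ->
  I (Defs.zero L n) -> (forall x y, I y -> le x y -> I x) ->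
  (forall x y, I x -> I y -> I (join x y)) ->
  (forall x, H x -> I x -> False) ->
  exists G, prime_filter G /\ (forall x, H x -> G x) /\ (forall x, G x -> ~ I x).
Proof.
move=> H1 Hup Hm I0 Idown Ij HI.
pose Good (X : car L n -> Prop) := [/\ forall x, H x -> X x,
  forall x y, X x -> le x y -> X y,
  forall x y, X x -> X y -> X (meet x y) & forall x, X x -> ~ I x].
pose P X := (exists x, X x) -> Good X.
have GH : Good H.
  by split => // x hx ix; apply: (HI x).
have := @classical_sets.Zorn_bigcup (car L n) P.
case.
- move=> Fs FP Ftot [x0 [X0 FX0 X0x0]].
  have gm : forall X z, Fs X -> X z -> Good X.
    by move=> X z FX Xz; apply: (FP X FX); exists z.
  split.
  + move=> x hx; exists X0 => //; have [h _ _ _] := gm _ _ FX0 X0x0; exact: h.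
  + move=> x y [X FX Xx] lxy; exists X => //; have [_ h _ _] := gm _ _ FX Xx; exact: h Xx lxy.
  + move=> x y [X FX Xx] [Y FY Yy].
    have [XY|YX] := Ftot X Y FX FY.
      exists Y => //; have [_ _ h _] := gm _ _ FY Yy; apply: h => //; exact: XY.
    exists X => //; have [_ _ h _] := gm _ _ FX Xx; apply: h => //; exact: YX.
  + move=> x [X FX Xx]; have [_ _ _ h] := gm _ _ FX Xx; exact: h.
move=> A [PA maxA].
have [x0 Ax0] : exists x, A x.
  apply: NNPP => nA; apply: (maxA H) => //; split.
    by move=> x Ax; case: nA; exists x.
  by move=> h; case: nA; exists (Defs.one L n); apply: h.
have [AH Aup Am AI] := PA (ex_intro _ x0 Ax0).
have ext : forall a, ~ A a -> exists y, A y /\ I (meet y a).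
  move=> a nAa; apply: NNPP => nex.
  pose B x := exists y, A y /\ le (meet y a) x.
  apply: (maxA B).
    split.
      move=> x Ax; exists x; split => //. exact: (le_meetl hB x a).
    move=> h; apply: nAa; apply: h; exists (Defs.one L n); split; first exact: AH.
    exact: (le_meetr hB (Defs.one L n) a).
  move=> _; split.
  - by move=> x hx; exists x; split; [exact: AH | exact: (le_meetl hB x a)].
  - move=> x y [z [Az lz]] lxy; exists z; split => //. exact: (le_trans' hB lz lxy).
  - move=> x y [z1 [Az1 l1]] [z2 [Az2 l2]]; exists (meet z1 z2); split; first exact: Am.
    eapply (le_glb hB).
      exact (le_trans' hB (le_meet2 hB (le_meetl hB z1 z2) (le_refl' hB a)) l1).
    exact (le_trans' hB (le_meet2 hB (le_meetr hB z1 z2) (le_refl' hB a)) l2).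
  - move=> x [z [Az lz]] Ix; apply: nex; exists z; split => //; exact: Idown Ix lz.
exists A; split; last by split.
split.
- by exists (Defs.zero L n) => h; exact: (AI _ h I0).
- by exists (Defs.one L n); exact: AH.
- exact: Aup.
- exact: Am.
move=> a b Aab; apply: NNPP => nab.
have nAa : ~ A a by move=> h; apply: nab; left.
have nAb : ~ A b by move=> h; apply: nab; right.
have [y1 [Ay1 I1]] := ext a nAa.
have [y2 [Ay2 I2]] := ext b nAb.
have Ay := Am _ _ Ay1 Ay2.
apply: (AI (meet (meet y1 y2) (join a b))); first exact: Am.
apply: (Idown _ _ (Ij _ _ I1 I2)).
have [_ [_ [_ [_ [_ [_ [mD _]]]]]]] := hB n.
rewrite mD; exact (le_join2 hB (le_meet2 hB (le_meetl hB y1 y2) (le_refl' hB a))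
  (le_meet2 hB (le_meetr hB y1 y2) (le_refl' hB b))).
Qed.

From Stdlib Require Import Classical.

Theorem lemma3p5 (L : MAlg) (HL : axioms L)
  (m : nat) (k : 'I_m -> nat)
  (F : forall i : 'I_m, car L (k i) -> Prop)
  (HF : forall i : 'I_m, prime_filter (F i)) :
  exists G : car L (\sum_(j < m) k j) -> Prop,
    prime_filter G /\
    (forall (i : 'I_m) (r : car L (k i)), G (@subst L _ _ (@cyl m k i) r) <-> F i r).
Proof.
have [hA0 hB hS] := HL.
have F1 : forall i, F i (Defs.one L (k i)).
  move=> i; have [_ [x fx] up _ _] := HF i; exact: (up _ _ fx (le_one hB x)).
have F0 : forall i, ~ F i (Defs.zero L (k i)).
  move=> i f0; have [[x nx] _ up _ _] := HF i; exact: (nx (up _ _ f0 (le_zero hB x))).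
pose H (x : car L (\sum_(j < m) k j)) := exists r : forall i, car L (k i),
  (forall i, F i (r i)) /\
  le (\big[@meet L _/Defs.one L _]_(i < m) @subst L _ _ (@cyl m k i) (r i)) x.
pose I (x : car L (\sum_(j < m) k j)) := exists s : forall i, car L (k i),
  (forall i, ~ F i (s i)) /\
  le x (\big[@join L _/Defs.zero L _]_(i < m) @subst L _ _ (@cyl m k i) (s i)).
have [G [PG [HG GI]]] : exists G, prime_filter G /\ (forall x, H x -> G x) /\ (forall x, G x -> ~ I x).
  apply: (@prime_ext L hB _ H I).
  - exists (fun i => Defs.one L (k i)); split => //; exact (le_one hB _).
  - move=> x y [r [Fr l]] lxy; exists r; split => //; exact (le_trans' hB l lxy).
  - move=> x y [r [Fr lr]] [r' [Fr' lr']]; exists (fun i => meet (r i) (r' i)); split.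
      by move=> i; have [_ _ _ hm _] := HF i; exact: hm.
    apply (le_glb hB).
      exact (le_trans' hB (@bigmeet_mono L hB _ m
        (fun i => @subst L _ _ (@cyl m k i) (meet (r i) (r' i)))
        (fun i => @subst L _ _ (@cyl m k i) (r i))
        (fun i => le_subst hS (@cyl m k i) (le_meetl hB (r i) (r' i)))) lr).
    exact (le_trans' hB (@bigmeet_mono L hB _ m
        (fun i => @subst L _ _ (@cyl m k i) (meet (r i) (r' i)))
        (fun i => @subst L _ _ (@cyl m k i) (r' i))
        (fun i => le_subst hS (@cyl m k i) (le_meetr hB (r i) (r' i)))) lr').
  - exists (fun i => Defs.zero L (k i)); split => //; exact (le_zero hB _).
  - move=> x y [s [Fs l]] lxy; exists s; split => //; exact (le_trans' hB lxy l).
  - move=> x y [s [Fs ls]] [s' [Fs' ls']]; exists (fun i => join (s i) (s' i)); split.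
      move=> i hj; have [_ _ _ _ hp] := HF i.
      by case: (hp _ _ hj) => h; [exact: (Fs i) | exact: (Fs' i)].
    apply (le_lub hB).
      exact (le_trans' hB ls (@bigjoin_mono L hB _ m
        (fun i => @subst L _ _ (@cyl m k i) (s i))
        (fun i => @subst L _ _ (@cyl m k i) (join (s i) (s' i)))
        (fun i => le_subst hS (@cyl m k i) (le_joinl hB (s i) (s' i))))).
    exact (le_trans' hB ls' (@bigjoin_mono L hB _ m
        (fun i => @subst L _ _ (@cyl m k i) (s' i))
        (fun i => @subst L _ _ (@cyl m k i) (join (s i) (s' i)))
        (fun i => le_subst hS (@cyl m k i) (le_joinr hB (s i) (s' i))))).
  - move=> x [r [Fr lr]] [s [Fs ls]].
    have [i hi] := hA0 m k r s (le_trans' hB lr ls).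
    apply: (Fs i); have [_ _ up _ _] := HF i; exact: (up _ _ (Fr i) hi).
exists G; split => // i r; split.
- move=> Gc; apply: NNPP => nF; apply: (GI _ Gc).
  pose s := @dfwith _ (fun j => car L (k j)) (fun j => Defs.zero L (k j)) i r.
  exists s; split.
    move=> j; rewrite /s; case: (eqVneq i j) => [<-|ne].
      by rewrite dfwith_in.
    by rewrite dfwith_out //; exact: F0.
  have := @bigjoin_ub L hB _ m (fun j => @subst L _ _ (@cyl m k j) (s j)) i.
  by rewrite /s /= dfwith_in.
- move=> Fr; apply: HG.
  pose s := @dfwith _ (fun j => car L (k j)) (fun j => Defs.one L (k j)) i r.
  exists s; split.
    move=> j; rewrite /s; case: (eqVneq i j) => [<-|ne].
      by rewrite dfwith_in.
    by rewrite dfwith_out //; exact: F1.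
  have := @bigmeet_lb L hB _ m (fun j => @subst L _ _ (@cyl m k j) (s j)) i.
  by rewrite /s /= dfwith_in.
Qed.
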